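(* Let $K=3$ and let $l>s$ be nonnegative integers. Then \[ h(l,\,l,\,s+1)\ \ge\ h(l+1,\,l,\,s). \]
   Context: For a vector $\vec n=(n_1,n_2,n_3)$ of nonnegative integers, the following random process is run: stocks start at $\vec n^{(0)}=\vec n$; at each step $t=1,2,\dots$, as long as at least two coordinates of $\vec n^{(t-1)}$ are nonzero, an index $i$ is chosen uniformly at random (independently of the past) among the indices with $n_i^{(t-1)}>0$, and $\vec n^{(t)}=\vec n^{(t-1)}-\vec e_i$ ($\vec e_i$ the $i$-th standard unit vector). The process stops at the first time $T$ at which at most one coordinate is nonzero, and $h(\vec n)=\mathbb{E}[T]$. Equivalently, with $\operatorname{support}(\vec n)=\{i:n_i\ne 0\}$: $h(\vec n)=0$ if $|\operatorname{support}(\vec n)|\le1$, and otherwise $h(\vec n)=1+\frac{1}{|\operatorname{support}(\vec n)|}\sum_{i\in\operatorname{support}(\vec n)}h(\vec n-\vec e_i)$. *)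

(* Defs.v *)
From mathcomp Require Import all_boot all_order all_algebra.
Set Implicit Arguments. Unset Strict Implicit. Unset Printing Implicit Defensive.
Import Order.TTheory GRing.Theory Num.Theory.
Local Open Scope ring_scope.

(* Expected absorption time h(n1,n2,n3) for K = 3, as a rational number.
   h n = 0 if at most one coordinate is nonzero; otherwise
   h n = 1 + (1/|supp n|) * sum_{i in supp n} h (n - e_i).
   [h_fuel f n] computes this recursion with fuel f; since each step lowers
   n1+n2+n3 by one, fuel n1+n2+n3 suffices, see [h]. *)
Fixpoint h_fuel (f : nat) (n1 n2 n3 : nat) : rat :=
  match f with
  | O => 0
  | S f' =>
    let s := ((n1 != 0%N) + (n2 != 0%N) + (n3 != 0%N))%N in
    if (s <= 1)%N then 0
    else 1 + (s%:R)^-1 *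
      ((if n1 != 0%N then h_fuel f' n1.-1 n2 n3 else 0) +
       (if n2 != 0%N then h_fuel f' n1 n2.-1 n3 else 0) +
       (if n3 != 0%N then h_fuel f' n1 n2 n3.-1 else 0))
  end.

Definition h (n1 n2 n3 : nat) : rat := h_fuel (n1 + n2 + n3) n1 n2 n3.

(* Main.v *)
Require Import Defs.
From mathcomp Require Import all_boot all_order all_algebra.
From mathcomp Require Import zify ring lra.
Import Order.TTheory GRing.Theory Num.Theory.
Local Open Scope ring_scope.

Lemma hF_sym12 f a b c : h_fuel f a b c = h_fuel f b a c.
Proof.
elim: f a b c => [//|f IH] a b c /=.
rewrite (addnC (a != 0%N)); case: ifP => // _.
rewrite [h_fuel f a.-1 _ _]IH [h_fuel f a _ c.-1]IH [h_fuel f a b.-1 _]IH.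
by rewrite (addrC (if a != 0%N then _ else _)).
Qed.

Lemma hF_sym23 f a b c : h_fuel f a b c = h_fuel f a c b.
Proof.
elim: f a b c => [//|f IH] a b c /=.
rewrite (addnAC (a != 0%N)); case: ifP => // _.
rewrite [h_fuel f a.-1 _ _]IH [h_fuel f a _ c.-1]IH [h_fuel f a b.-1 _]IH.
by rewrite addrAC.
Qed.

Lemma hF_ge0 f a b c : 0 <= h_fuel f a b c.
Proof.
elim: f a b c => [//|f IH] a b c /=.
case: ifP => // _.
apply: addr_ge0 => //; apply: mulr_ge0; first by rewrite invr_ge0 ler0n.
by apply: addr_ge0; [apply: addr_ge0|]; case: ifP.
Qed.

Arguments h : simpl never.

Lemma hFE f a b c : f = (a + b + c)%N -> h_fuel f a b c = h a b c.
Proof. by move=> ->. Qed.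

Lemma h12 a b c : h a b c = h b a c.
Proof. by rewrite /h (addnC a b) hF_sym12. Qed.
Lemma h23 a b c : h a b c = h a c b.
Proof. by rewrite /h (addnAC a b c) hF_sym23. Qed.
Lemma h13 a b c : h a b c = h c b a.
Proof. by rewrite h12 h23 h12. Qed.
Lemma h_ge0 a b c : 0 <= h a b c.
Proof. exact: hF_ge0. Qed.
Lemma h00 a : h a 0 0 = 0.
Proof. by rewrite /h; case: a => [|a] //=; rewrite addn0. Qed.

Lemma hS a b c : (0 < a + b + c)%N ->
  h a b c =
    let s := ((a != 0%N) + (b != 0%N) + (c != 0%N))%N in
    if (s <= 1)%N then 0
    else 1 + (s%:R)^-1 *
      ((if a != 0%N then h a.-1 b c else 0) +
       (if b != 0%N then h a b.-1 c else 0) +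
       (if c != 0%N then h a b c.-1 else 0)).
Proof.
rewrite {1}/h; case E: (a + b + c)%N => [//|N] _ /=.
have -> : (if a != 0%N then h_fuel N a.-1 b c else 0) = (if a != 0%N then h a.-1 b c else 0).
  by case: a E => //= a E; rewrite hFE //; lia.
have -> : (if b != 0%N then h_fuel N a b.-1 c else 0) = (if b != 0%N then h a b.-1 c else 0).
  by case: b E => //= b E; rewrite hFE //; lia.
have -> : (if c != 0%N then h_fuel N a b c.-1 else 0) = (if c != 0%N then h a b c.-1 else 0).
  by case: c E => //= c E; rewrite hFE //; lia.
by [].
Qed.

Lemma R3 x y z : h x.+1 y.+1 z.+1 =
  1 + (3%:R)^-1 * (h x y.+1 z.+1 + h x.+1 y z.+1 + h x.+1 y.+1 z).
Proof. by rewrite hS. Qed.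

Lemma R2 x y : h x.+1 y.+1 0 =
  1 + (2%:R)^-1 * (h x y.+1 0 + h x.+1 y 0).
Proof. by rewrite hS //= addr0. Qed.
Lemma Psi a c : (c < a)%N -> 0 <= h a.-1 c.+1 0 - h a c 0.
Proof.
have [n] := ubnP (a + c); elim: n a c => // n IH a c Hn Hca.
have [->|Ha] := eqVneq a c.+1; first by rewrite h12 subrr.
case: c Hn Hca Ha => [|c] Hn Hca Ha.
  by rewrite h00 subr0 h_ge0.
case: a Hn Hca Ha => [|[|[|a]]] Hn Hca Ha //=; try lia.
rewrite (R2 a.+1 c.+1) (R2 a.+2 c).
have H1 := IH a.+3 c ltac:(lia) ltac:(lia).
have H2 := IH a.+2 c.+1 ltac:(lia) ltac:(lia).
simpl in H1, H2.
lra.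
Qed.
Definition phi a b := h a.-1 b 1 - h a b 0.

Ltac gen_atoms :=
  repeat match goal with |- context[phi ?a ?b] => let x := fresh "p" in generalize (phi a b) as x; intro x end;
  repeat match goal with |- context[h ?a ?b ?c] => let x := fresh "q" in generalize (h a b c) as x; intro x end.


Lemma EA a b : phi a.+2 b.+1 =
  (3%:R)^-1 * (phi a.+1 b.+1 + phi a.+2 b) + (6%:R)^-1 * (h a.+1 b.+1 0 - h a.+2 b 0).
Proof. rewrite /phi /= (R3 a b 0) (R2 a.+1 b); lra. Qed.

Lemma Aall n : forall a b, (a + b < n)%N -> (0 < a)%N ->
  ((b <= a)%N -> 0 <= phi a b) /\ ((a < b)%N -> 0 <= phi a b + phi b a).
Proof.
elim: n => // n IH.
have HA : forall a b, (a + b < n.+1)%N -> (0 < a)%N -> (b <= a)%N -> 0 <= phi a b.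
  move=> a b Hn Ha Hb.
  case: b Hn Hb => [|b] Hn Hb.
    by rewrite /phi h00 subr0 h_ge0.
  case: a Hn Ha Hb => [|[|a]] Hn Ha Hb //.
    by case: b Hn Hb => // _ _; rewrite /phi /= h13 subrr.
  rewrite EA.
  have Hd : 0 <= h a.+1 b.+1 0 - h a.+2 b 0.
    have [Eab|Nab] := eqVneq b a.+1; first by rewrite Eab h12 subrr.
    exact: (@Psi a.+2 b ltac:(lia)).
  have [Hb'|Hb'] := leqP b.+1 a.+1.
    have H1 := (IH a.+1 b.+1 ltac:(lia) ltac:(lia)).1 Hb'.
    have H2 := (IH a.+2 b ltac:(lia) ltac:(lia)).1 ltac:(lia).
    move: H1 H2 Hd; clear IH; (gen_atoms; lra).
  have Eb : b = a.+1 by lia.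
  subst b.
  have H1 := (IH a.+1 a.+2 ltac:(lia) ltac:(lia)).2 ltac:(lia).
  move: H1 Hd; clear IH; (gen_atoms; lra).
move=> a b Hn Ha; split; first exact: HA.
move=> Hab.
case: a Hn Ha Hab => [|[|a]] Hn Ha Hab //.
  have H1 := HA b 1%N ltac:(lia) ltac:(lia) ltac:(lia).
  by rewrite {1}/phi /= h13 subrr add0r.
case: b Hn Hab => [|[|[|b]]] Hn Hab; try (exfalso; lia).
rewrite (EA a b.+2) (EA b.+1 a.+1).
have E1 := h12 a.+1 b.+3 0.
have E2 := h12 a.+2 b.+2 0.
have H1 := (IH a.+1 b.+3 ltac:(lia) ltac:(lia)).2 ltac:(lia).
have [Hb'|Hb'] := ltnP a.+2 b.+2.
  have H2 := (IH a.+2 b.+2 ltac:(lia) ltac:(lia)).2 Hb'.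
  move: H1 H2 E1 E2; clear IH HA.
  (gen_atoms; lra).
have Eb : b = a by lia.
subst b.
have H2 := (IH a.+2 a.+2 ltac:(lia) ltac:(lia)).1 (leqnn _).
move: H1 H2 E1 E2; clear IH HA.
(gen_atoms; lra).
Qed.
Definition D13 a b c := h a.-1 b c.+1 - h a b c.

Ltac gen_atoms2 :=
  repeat match goal with |- context[D13 ?a ?b ?c] => let x := fresh "d" in generalize (D13 a b c) as x; intro x end;
  gen_atoms.

Lemma E3 a b c : D13 a.+2 b.+1 c.+1 =
  (3%:R)^-1 * (D13 a.+1 b.+1 c.+1 + D13 a.+2 b c.+1 + D13 a.+2 b.+1 c).
Proof. rewrite /D13 /= (R3 a b c.+1) (R3 a.+1 b c); lra. Qed.

Lemma Fall n : forall a b c, (a + b + c < n)%N -> (c < a)%N ->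
  ((b <= a)%N -> 0 <= D13 a b c) /\ ((a < b)%N -> 0 <= D13 a b c + D13 b a c).
Proof.
elim: n => // n IH.
have HF : forall a b c, (a + b + c < n.+1)%N -> (c < a)%N -> (b <= a)%N -> 0 <= D13 a b c.
  move=> a b c Hn Hca Hb.
  have [Ea|Na] := eqVneq a c.+1.
    by rewrite Ea /D13 /= h13 subrr.
  case: c Hn Hca Na => [|c] Hn Hca Na.
    exact: ((Aall (a+b).+1 a b ltac:(lia) Hca).1 Hb).
  case: b Hn Hb => [|b] Hn Hb.
    rewrite /D13 h23 [h a 0 _]h23; exact: Psi.
  case: a Hn Hca Na Hb => [|[|a]] Hn Hca Na Hb; try (exfalso; lia).
  rewrite E3.
  have H2 := (IH a.+2 b c.+1 ltac:(lia) ltac:(lia)).1 ltac:(lia).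
  have H3 := (IH a.+2 b.+1 c ltac:(lia) ltac:(lia)).1 ltac:(lia).
  have [Hb'|Hb'] := leqP b.+1 a.+1.
    have H1 := (IH a.+1 b.+1 c.+1 ltac:(lia) ltac:(lia)).1 Hb'.
    move: H1 H2 H3; clear IH; gen_atoms2; lra.
  have Eb : b = a.+1 by lia.
  subst b.
  have H1 := (IH a.+1 a.+2 c.+1 ltac:(lia) ltac:(lia)).2 ltac:(lia).
  move: H1 H3; clear IH; gen_atoms2; lra.
move=> a b c Hn Hca; split; first exact: HF.
move=> Hab.
have [Ea|Na] := eqVneq a c.+1.
  have H1 := HF b a c ltac:(lia) ltac:(lia) ltac:(lia).
  by rewrite {1}Ea {1}/D13 /= h13 subrr add0r.
case: c Hn Hca Na => [|c] Hn Hca Na.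
  exact: ((Aall (a+b).+1 a b ltac:(lia) Hca).2 Hab).
case: a Hn Hca Na Hab => [|[|a]] Hn Hca Na Hab; try (exfalso; lia).
case: b Hn Hab => [|[|[|b]]] Hn Hab; try (exfalso; lia).
rewrite (E3 a b.+2 c) (E3 b.+1 a.+1 c).
have H1 := (IH a.+1 b.+3 c.+1 ltac:(lia) ltac:(lia)).2 ltac:(lia).
have H3 := (IH a.+2 b.+3 c ltac:(lia) ltac:(lia)).2 ltac:(lia).
have [Hb'|Hb'] := ltnP a.+2 b.+2.
  have H2 := (IH a.+2 b.+2 c.+1 ltac:(lia) ltac:(lia)).2 Hb'.
  move: H1 H2 H3; clear IH HF; gen_atoms2; lra.
have Eb : b = a by lia.
subst b.
have H2 := (IH a.+2 a.+2 c.+1 ltac:(lia) ltac:(lia)).1 (leqnn _).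
move: H1 H2 H3; clear IH HF; gen_atoms2; lra.
Qed.

Theorem lemma4 (l s : nat) (hls : (s < l)%N) :
  h (l + 1)%N l s <= h l l s.+1.
Proof.
have := (Fall (l + 1 + l + s).+1 (l + 1)%N l s ltac:(lia) ltac:(lia)).1 ltac:(lia).
by rewrite /D13 addn1 /= subr_ge0.
Qed.
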